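(* Let $G=(V,E)$ be an unweighted graph with $n$ vertices and let $k\geq 2$ be an integer. Run the clustering defined in the context with $r=k-1$ and $p=1-n^{-1/k}$. Then there exists a set of edges $F\subseteq E$, determined by the sampled values, such that for every outcome and every edge $(x,y)\in E$, one of its endpoints has an edge from $F$ into the cluster of the other endpoint (i.e., either $(x,y')\in F$ for some $y'$ with $c_{y'}=c_y$, or $(x',y)\in F$ for some $x'$ with $c_{x'}=c_x$), and $\mathbb{E}[|F|]=O(n^{1+1/k})$.
   Context: Setting (the clustering): $G=(V,E)$ is a graph (here unweighted, i.e., all edge weights $1$) with shortest-path distance $d_G$, and each vertex has a distinct identifier $\mathrm{ID}(v)$. Let $p\in(0,1)$ and $r\in\mathbb{N}$. Let $\mathrm{GeomCap}(p,r)$ be the distribution on $\{0,\dots,r\}$ with $\Pr[=i]=p(1-p)^i$ for $0\leq i\leq r-1$ and $\Pr[=r]=(1-p)^r$. Each vertex $v$ independently samples $\delta_v\sim\mathrm{GeomCap}(p,r)$. For $u,x\in V$ define $d^{(u)}(s,x):=r-\delta_u+d_G(u,x)$ and the level $d_{G'}(s,x):=\min_{u\in V} d^{(u)}(s,x)$. The cluster center $c_x$ of $x$ is the vertex $u$ with smallest $\mathrm{ID}$ among those with $d^{(u)}(s,x)=d_{G'}(s,x)$; the cluster of a center $c$ is $\{x\in V: c_x=c\}$. *)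

(* Defs.v *)
From mathcomp Require Import all_boot.
From Stdlib Require Import Reals.
From mathcomp Require Import all_algebra Rstruct.

Set Implicit Arguments.
Unset Strict Implicit.
Unset Printing Implicit Defensive.

Section Clustering.
Variable V : finType.
Variable e : rel V.

Fixpoint ball (k : nat) (u : V) : {set V} :=
  match k with
  | 0 => [set u]
  | k'.+1 => ball k' u :|: [set y | [exists z in ball k' u, e z y]]
  end.

(* shortest-path distance d_G(u,x), meaningful when x is reachable from u
   (a shortest path then has fewer than #|V| edges). *)
Definition dist (u x : V) : nat :=
  find (fun i => x \in ball i u) (iota 0 #|V|).

(* d^{(u)}(s,x) = r - delta_u + d_G(u,x) (finite only when u reaches x) *)
Definition dcand (r : nat) (delta : V -> nat) (u x : V) : nat :=
  r - delta u + dist u x.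

(* level d_{G'}(s,x) = min over u (with finite d_G(u,x)) of d^{(u)}(s,x);
   the term u = x (value r - delta_x) is used as the seed. *)
Definition level (r : nat) (delta : V -> nat) (x : V) : nat :=
  \big[minn/(r - delta x)]_(u | connect e u x) dcand r delta u x.

Definition center (ID : V -> nat) (r : nat) (delta : V -> nat) (x : V) : V :=
  [arg min_(u < x | connect e u x && (dcand r delta u x == level r delta x)) ID u].

Definition edges : {set {set V}} :=
  [set [set xy.1; xy.2] | xy in [set xy : V * V | e xy.1 xy.2]].

End Clustering.

Definition geomcap (p : R) (r i : nat) : R :=
  if (i < r)%N then (p * (1 - p) ^ i)%R else ((1 - p) ^ r)%R.

(* probability of an outcome delta : V -> {0,...,k-1} (i.e. r = k-1),
   vertices sampled independently *)
Definition outcome_prob (V : finType) (p : R) (r : nat) (k : nat)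
    (delta : {ffun V -> 'I_k}) : R :=
  (\prod_(v : V) geomcap p r (delta v))%R.

(* Main.v *)
Require Import Defs.
From mathcomp Require Import all_boot.
From Stdlib Require Import Reals.
From mathcomp Require Import all_order all_algebra Rstruct.
From Stdlib Require Import Lra.
Ltac slra := lra.
From mathcomp Require Import zify ring lra.

Set Implicit Arguments.
Unset Strict Implicit.
Unset Printing Implicit Defensive.

Section Comb.
Variable V : finType.
Variable e : rel V.
Hypothesis esym : symmetric e.
Variable ID : V -> nat.
Hypothesis IDinj : injective ID.
Variable r : nat.

Lemma ball_step i u y x : y \in ball e i u -> e y x -> x \in ball e i.+1 u.
Proof.
move=> Hy He /=; rewrite in_setU; apply/orP; right; rewrite inE.
by apply/existsP; exists y; rewrite Hy He.
Qed.

Lemma dist_self x : Defs.dist e x x = 0.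
Proof.
rewrite /Defs.dist; have : 0 < #|V| by apply/card_gt0P; exists x.
case: #|V| => // n _ /=; rewrite ifT //; exact/set1P.
Qed.

Lemma dist_edge u y x : e y x -> Defs.dist e u x <= (Defs.dist e u y).+1.
Proof.
move=> He; rewrite /Defs.dist.
set s := iota 0 #|V|.
have Hs : size s = #|V| by rewrite size_iota.
case: (ltnP (find (fun i => y \in ball e i u) s) #|V|) => Hlt.
  have Hhas : has (fun i => y \in ball e i u) s by rewrite has_find Hs.
  have := nth_find 0 Hhas; rewrite nth_iota // add0n => Hy.
  have Hx := ball_step Hy He.
  case: (ltnP (find (fun i => y \in ball e i u) s).+1 #|V|) => H2.
    rewrite leqNgt; apply/negP => H3.
    have := before_find 0 H3; rewrite nth_iota // add0n Hx //.
  by apply: leq_trans (find_size _ _) _; rewrite Hs.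
by apply: leq_trans (find_size _ _) _; rewrite Hs; apply: leq_trans Hlt _.
Qed.

Lemma bigmin_le (I : finType) (P : pred I) (F : I -> nat) s u0 :
  P u0 -> \big[minn/s]_(i | P i) F i <= F u0.
Proof.
move=> Pu0; rewrite -big_filter.
have : u0 \in [seq i <- index_enum I | P i] by rewrite mem_filter Pu0 mem_index_enum.
elim: [seq i <- index_enum I | P i] => // a l IH; rewrite inE big_cons => /orP[/eqP <-|Hl].
  by rewrite geq_minl.
by apply: leq_trans (geq_minr _ _) (IH Hl).
Qed.

Lemma bigmin_mem (I : finType) (P : pred I) (F : I -> nat) s :
  (\big[minn/s]_(i | P i) F i == s) || [exists u, P u && (\big[minn/s]_(i | P i) F i == F u)].
Proof.
apply: (big_ind (fun m => (m == s) || [exists u, P u && (m == F u)])).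
- by rewrite eqxx.
- by move=> a b Ha Hb; rewrite /minn; case: ltnP.
- move=> i Pi; apply/orP; right; apply/existsP; exists i; apply/andP; split=> //.
Qed.

Section Fixd.
Variable d : V -> nat.
Notation L := (level e r d).
Notation Cn := (center e ID r d).
Notation dc := (dcand e r d).

Lemma level_le u x : connect e u x -> L x <= dcand e r d u x.
Proof. move=> H; exact: (bigmin_le (P := fun u => connect e u x)). Qed.

Lemma level_att x : exists2 u, connect e u x & L x = dcand e r d u x.
Proof.
have := bigmin_mem (fun u => connect e u x) (fun u => dcand e r d u x) (r - d x).
rewrite -/(level e r d x) => /orP[/eqP H|/existsP[u /andP[Hu /eqP H]]].
  by exists x; rewrite ?connect0 // H /dcand dist_self addn0.
by exists u.
Qed.

Lemma center_spec x :
  [/\ connect e (Cn x) x, dcand e r d (Cn x) x = L x &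
    forall u, connect e u x -> dcand e r d u x = L x -> ID (Cn x) <= ID u].
Proof.
have [u0 Hu0 Hd0] := level_att x.
set P := fun u => connect e u x && (dcand e r d u x == L x).
have Pu0 : P u0 by rewrite /P Hu0 Hd0 eqxx.
have Heq : Cn x = arg_min u0 P ID.
  rewrite /center /arg_min /extremum; case: pickP => //= none.
  case: (arg_minnP ID Pu0) => i Pi Hmin.
  have := none i; rewrite /= => /negP; case; apply/andP; split=> //.
  by apply/forallP => j; apply/implyP; apply: Hmin.
rewrite Heq; case: (arg_minnP ID Pu0) => i /andP[Hc /eqP Hd] Hmin.
split=> // u Hu Hdu; apply: Hmin; by rewrite /P Hu Hdu eqxx.
Qed.

End Fixd.

Definition lexlt d y x := (level e r d y < level e r d x) ||
  ((level e r d y == level e r d x) && (ID (center e ID r d y) < ID (center e ID r d x))).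

Definition counted d x c := (c != center e ID r d x) &&
  [exists y, e x y && (center e ID r d y == c) && lexlt d y x].

Lemma key d d' c x : (forall w, w != c -> d' w = d w) -> d c < d' c -> d' c <= r ->
  counted d x c -> center e ID r d' x = c.
Proof.
move=> Hd' Hlt Hle /andP[Hne /existsP[y /andP[/andP[Exy /eqP Hcy] Hlex]]].
have [Cy1 Cy2 _] := center_spec d y; rewrite Hcy in Cy1 Cy2.
have Eyx : e y x by rewrite esym.
have Ccx : connect e c x := connect_trans Cy1 (connect1 Eyx).
have Hdc' : dcand e r d' c x <= level e r d y.
  rewrite -Cy2 /dcand; have := dist_edge c Eyx; lia.
have Hother : forall w, w != c -> connect e w x -> level e r d x <= dcand e r d' w x.
  by move=> w Hw Cw; rewrite /dcand Hd' //; apply: level_le.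
have HLyx : level e r d y <= level e r d x.
  by case/orP: Hlex => [/ltnW //|/andP[/eqP -> _]].
have Hlev' : level e r d' x = dcand e r d' c x.
  apply/eqP; rewrite eqn_leq level_le //=.
  have [u Cu ->] := level_att d' x.
  case: (u =P c) => [->//|/eqP Hu].
  exact: leq_trans Hdc' (leq_trans HLyx (Hother u Hu Cu)).
have [Cz1 Cz2 Cz3] := center_spec d' x.
have HIz := Cz3 c Ccx (Logic.eq_sym Hlev').
apply/eqP; case: (center e ID r d' x =P c) => // /eqP Hzc; exfalso.
set z := center e ID r d' x in Cz1 Cz2 Cz3 HIz Hzc.
have Hz := Hother z Hzc Cz1.
have E1 : dcand e r d' z x = dcand e r d z x by rewrite /dcand Hd'.
have Hzold := level_le d Cz1.
have [Cx1 Cx2 Cx3] := center_spec d x.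
case/orP: Hlex => [Hl|/andP[/eqP Hl HI]].
  have : level e r d y < level e r d x := Hl. lia.
have Hzl : dcand e r d z x = level e r d x.
  by apply/eqP; rewrite eqn_leq Hzold andbT -E1 Cz2 Hlev' -Hl.
rewrite Hcy in HI; have := Cx3 z Cz1 Hzl; lia.
Qed.

Section FDef.
Variable d : V -> nat.
Notation cen := (center e ID r d).

Definition nb x c := [pick y | e x y && (cen y == c)].
Definition Qset := [set xc : V * V | (nb xc.1 xc.2 != None) &&
   ((xc.2 == cen xc.1) || counted d xc.1 xc.2)].
Definition Fset := [set [set xc.1; odflt xc.1 (nb xc.1 xc.2)] | xc in Qset].

Lemma F_sub : Fset \subset edges e.
Proof.
apply/subsetP => s /imsetP[[x c] /= Hq ->]; rewrite inE /= in Hq.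
case/andP: Hq; rewrite /nb; case: pickP => [y /andP[Exy _]|] //= _ _.
by apply/imsetP; exists (x, y); rewrite ?inE.
Qed.

Lemma F_mem x c y : e x y -> cen y = c -> (c == cen x) || counted d x c ->
  exists y', [set x; y'] \in Fset /\ cen y' = c.
Proof.
move=> Exy Hc H.
case Hp : (nb x c) => [y'|].
  have /andP[_ /eqP Hc'] : e x y' && (cen y' == c).
    by move: Hp; rewrite /nb; case: pickP => // z Hz [<-].
  exists y'; split => //; apply/imsetP; exists (x, c) => /=.
    by rewrite inE /= Hp H.
  by rewrite Hp.
move: Hp; rewrite /nb; case: pickP => // none _.
by have := none y; rewrite Exy Hc eqxx.
Qed.

Lemma F_cover x y : e x y ->
  (exists y', [set x; y'] \in Fset /\ cen y' = cen y) \/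
  (exists x', [set x'; y] \in Fset /\ cen x' = cen x).
Proof.
move=> Exy; have Eyx : e y x by rewrite esym.
case: (cen x =P cen y) => Heq.
  by left; apply: (F_mem Exy) => //; rewrite Heq eqxx.
case Hl : (lexlt d y x).
  left; apply: (F_mem Exy) => //; apply/orP; right.
  rewrite /counted; apply/andP; split; first by apply/eqP => H; apply: Heq.
  by apply/existsP; exists y; rewrite Exy eqxx Hl.
have Hl' : lexlt d x y.
  move: Hl; rewrite /lexlt.
  have Hid : ID (cen x) != ID (cen y).
    by apply/eqP => /IDinj.
  move: Hid; rewrite /lexlt; lia.
right; have [y' [Hy' Hc']] : exists y', [set y; y'] \in Fset /\ cen y' = cen x.
  apply: (F_mem Eyx) => //.
  apply/orP; right; rewrite /counted; apply/andP; split.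
    by apply/eqP => H; apply: Heq.
  by apply/existsP; exists x; rewrite Eyx eqxx Hl'.
by exists y'; rewrite setUC.
Qed.

Lemma F_card : #|Fset| <= #|V| + \sum_(x : V) \sum_(c : V) counted d x c.
Proof.
apply: leq_trans (leq_imset_card _ _) _.
rewrite -sum1_card.
have -> : \sum_(i in Qset) 1 = \sum_(xc : V * V) ((xc \in Qset) : nat).
  by rewrite big_mkcond /=; apply: eq_bigr => i _; case: (i \in Qset).
have -> : \sum_(xc : V * V) ((xc \in Qset) : nat) =
    \sum_(x : V) \sum_(c : V) (((x, c) \in Qset) : nat).
  by rewrite pair_bigA; apply: eq_bigr => [[]].
have -> : #|V| = \sum_(x : V) \sum_(c : V) ((c == cen x) : nat).
  rewrite -sum1_card; apply: eq_bigr => x _.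
  rewrite (bigD1 (cen x)) //= eqxx big1 // => c /negbTE -> //.
rewrite -big_split /=; apply: leq_sum => x _.
rewrite -big_split /=; apply: leq_sum => c _.
rewrite inE /=; case: (_ != None) => //=.
by case: (c == cen x); case: (counted d x c).
Qed.

End FDef.

End Comb.

Import Order.TTheory GRing.Theory Num.Theory.
Local Open Scope ring_scope.

Section Tail.
Variable q : R.
Hypothesis q0 : 0 < q.
Hypothesis q1 : q <= 1.
Variable r : nat.

Definition pq : R := (1 - q)%R.
Definition w (j : nat) : R := geomcap pq r j.

Lemma w_ge0 j : 0 <= w j.
Proof.
have qa := q0; have qb := q1.
rewrite /w /geomcap /pq; case: (j < r)%nat.
  by apply: mulr_ge0; [rewrite /pq; lra| change (0 <= (1 - (1 - q)) ^+ j); apply: exprn_ge0; lra].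
by change (0 <= (1 - (1 - q)) ^+ r); apply: exprn_ge0; lra.
Qed.

Lemma tail_nat m : (m <= r)%nat -> \sum_(r - m <= j < r.+1) w j = q ^+ (r - m).
Proof.
have qa := q0; have qb := q1.
elim: m => [_|m IH Hm].
  rewrite subn0 big_nat1 /w /geomcap ltnn.
  by change ((1 - (1 - q)) ^+ r = q ^+ r); congr (_ ^+ _); lra.
rewrite big_ltn; last lia.
have -> : ((r - m.+1).+1 = r - m)%nat by lia.
rewrite IH; last lia.
rewrite /w /geomcap /pq.
have -> : (r - m.+1 < r)%nat = true by lia.
change ((1 - q) * (1 - (1 - q)) ^+ (r - m.+1) + q ^+ (r - m) = q ^+ (r - m.+1)).
have -> : (r - m = (r - m.+1).+1)%nat by lia.
rewrite exprS; have -> : 1 - (1 - q) = q by lra.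
lra.
Qed.

Lemma tail i : (i <= r)%nat -> \sum_(j < r.+1 | (i <= j)%nat) w j = q ^+ i.
Proof.
have qa := q0; have qb := q1.
move=> Hi.
have -> : \sum_(j < r.+1 | (i <= j)%nat) w j = \sum_(i <= j < r.+1) w j.
  by rewrite big_geq_mkord; apply: eq_bigl => j.
have -> : i = (r - (r - i))%nat by lia.
by rewrite tail_nat //; lia.
Qed.

Lemma sum_w : \sum_(j < r.+1) w j = 1.
Proof.
have qa := q0; have qb := q1.
by have := tail (leq0n r); rewrite expr0 => <-; apply: eq_bigl => j.
Qed.

Lemma oneD (a b : pred 'I_r.+1) :
  (forall j j' : 'I_r.+1, a j -> (j < j')%nat -> b j') ->
  \sum_(j < r.+1) w j * (a j)%:R <= q^-1 * \sum_(j < r.+1) w j * (b j)%:R + q ^+ r.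
Proof.
have qa := q0; have qb := q1.
move=> Hab.
have Hq : 0 <= q ^+ r by apply: exprn_ge0; lra.
have Hb0 : 0 <= q^-1 * \sum_(j < r.+1) w j * (b j)%:R.
  apply: mulr_ge0; first by rewrite invr_ge0; lra.
  by apply: sumr_ge0 => j _; apply: mulr_ge0; [exact: w_ge0|exact: ler0n].
case: (pickP a) => [j0 Hj0 | none]; last first.
  rewrite big1; first lra.
  by move=> j _; rewrite none mulr0.
have ex : exists i, (i < r.+1)%nat && a (inord i).
  by exists j0; rewrite ltn_ord inord_val Hj0.
case: (ex_minnP ex) => i0 /andP[Hi0 Ha0] Hmin.
have H1 : \sum_(j < r.+1) w j * (a j)%:R <= \sum_(j < r.+1 | (i0 <= j)%nat) w j.
  rewrite (bigID (fun j : 'I_r.+1 => (i0 <= j)%nat)) /=.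
  rewrite [X in _ + X]big1; last first.
    move=> j; case Ha : (a j); last by rewrite mulr0.
    have := Hmin j; rewrite ltn_ord inord_val Ha => /(_ isT) ->; done.
  rewrite addr0; apply: ler_sum => j _.
  by case: (a j); rewrite ?mulr1 ?mulr0 ?w_ge0.
rewrite tail in H1; last by rewrite -ltnS.
case: (ltnP i0 r) => Hir; last first.
  have Hr : i0 = r by apply/eqP; rewrite eqn_leq Hir -ltnS Hi0.
  rewrite Hr in H1; lra.
have H2 : q ^+ i0.+1 <= \sum_(j < r.+1) w j * (b j)%:R.
  rewrite -tail //.
  rewrite [X in _ <= X](bigID (fun j : 'I_r.+1 => (i0.+1 <= j)%nat)) /=.
  have H3 : 0 <= \sum_(j < r.+1 | ~~ (i0.+1 <= j)%nat) w j * (b j)%:R.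
    by apply: sumr_ge0 => j _; apply: mulr_ge0; [exact: w_ge0|exact: ler0n].
  suff H4 : \sum_(j < r.+1 | (i0.+1 <= j)%nat) w j <=
            \sum_(j < r.+1 | (i0.+1 <= j)%nat) w j * (b j)%:R by lra.
  apply: ler_sum => j Hj.
  have -> : b j by apply: (Hab (inord i0)) => //; rewrite inordK.
  by rewrite mulr1.
have Hqi : q^-1 * q ^+ i0.+1 = q ^+ i0.
  by rewrite exprS mulrA mulVf ?mul1r //; apply/eqP => H; move: qa; rewrite H ltxx.
have : q^-1 * q ^+ i0.+1 <= q^-1 * \sum_(j < r.+1) w j * (b j)%:R.
  by apply: ler_wpM2l => //; rewrite invr_ge0; lra.
rewrite Hqi; lra.
Qed.

End Tail.

Section Fiber.
Variable V : finType.
Variable r : nat.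
Variable w : nat -> R.
Notation D := {ffun V -> 'I_r.+1}.

Definition Pr (dl : D) := \prod_v w (dl v).
Definition upd (dl : D) (c : V) (j : 'I_r.+1) : D :=
  [ffun v => if v == c then j else dl v].

Lemma upd_c dl c j : upd dl c j c = j.
Proof. by rewrite ffunE eqxx. Qed.

Lemma upd_upd dl c j j' : upd (upd dl c j) c j' = upd dl c j'.
Proof. by apply/ffunP => v; rewrite !ffunE; case: (v == c). Qed.

Lemma upd_id dl c : upd dl c (dl c) = dl.
Proof. by apply/ffunP => v; rewrite !ffunE; case: eqP => // ->. Qed.

Lemma Pr_upd dl c j : Pr (upd dl c j) = w j * \prod_(v | v != c) w (dl v).
Proof.
rewrite /Pr (bigD1 c) //= upd_c; congr (_ * _).
by apply: eq_bigr => v /negbTE Hv; rewrite ffunE Hv.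
Qed.

Lemma fiber c (j0 : 'I_r.+1) (h : D -> R) :
  \sum_(dl : D) Pr dl * h dl =
  \sum_(dl : D | dl c == j0) (\prod_(v | v != c) w (dl v)) *
     \sum_(j < r.+1) w j * h (upd dl c j).
Proof.
rewrite (partition_big (fun dl : D => dl c) xpredT) //=.
have E : forall j : 'I_r.+1, \sum_(dl : D | true && (dl c == j)) Pr dl * h dl =
   \sum_(dl : D | dl c == j0) w j * \prod_(v | v != c) w (dl v) * h (upd dl c j).
  move=> j.
  rewrite (reindex_onto (fun dl => upd dl c j) (fun dl => upd dl c j0)); last first.
    by move=> dl /eqP <-; rewrite upd_upd upd_id.
  apply: eq_big => [dl|dl _]; last by rewrite Pr_upd.
  rewrite upd_c eqxx /= upd_upd.
  apply/eqP/eqP => [<-|<-]; first by rewrite upd_c.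
  by rewrite upd_id.
rewrite (eq_bigr _ (fun j _ => E j)) exchange_big /=.
apply: eq_bigr => dl _; rewrite mulr_sumr; apply: eq_bigr => j _.
by rewrite mulrA [w j * _]mulrC.
Qed.

Lemma total : \sum_(dl : D) Pr dl = \prod_(v : V) \sum_(j < r.+1) w j.
Proof. by rewrite bigA_distr_bigA. Qed.

End Fiber.

Section MainBound.
Variable V : finType.
Variable e : rel V.
Hypothesis esym : symmetric e.
Variable ID : V -> nat.
Hypothesis IDinj : injective ID.
Variable r : nat.
Variable q : R.
Hypothesis q0 : 0 < q.
Hypothesis q1 : q <= 1.

Notation D := {ffun V -> 'I_r.+1}.
Definition dd (dl : D) : V -> nat := fun v => nat_of_ord (dl v).
Notation W := (w q r).

Lemma Pr_ge0 (dl : D) : 0 <= Pr W dl.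
Proof. by apply: prodr_ge0 => v _; apply: w_ge0. Qed.

Lemma Wc_ge0 c (dl : D) : 0 <= \prod_(v | v != c) W (dl v).
Proof. by apply: prodr_ge0 => v _; apply: w_ge0. Qed.

Lemma sum_Pr : \sum_(dl : D) Pr W dl = 1.
Proof.
rewrite total; apply: big1 => v _; exact: sum_w.
Qed.

Lemma sum_Wc c : \sum_(dl : D | dl c == ord0) \prod_(v | v != c) W (dl v) = 1.
Proof.
have H := fiber W c (@ord0 r) (fun _ => 1); cbv beta in H.
have E1 : \sum_(dl : D) Pr W dl * 1 = 1.
  by under eq_bigr do rewrite mulr1; exact: sum_Pr.
have E2 : \sum_(j < r.+1) W j * 1 = 1.
  by under eq_bigr do rewrite mulr1; exact: sum_w.
rewrite E1 in H; rewrite [RHS]H; apply: eq_bigr => dl _; by rewrite E2 mulr1.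
Qed.

Lemma per_xc x c :
  \sum_(dl : D) Pr W dl * (counted e ID r (dd dl) x c)%:R <=
  q^-1 * \sum_(dl : D) Pr W dl * (center e ID r (dd dl) x == c)%:R + q ^+ r.
Proof.
have qa := q0; have qb := q1.
rewrite (fiber W c (@ord0 r)) [X in q^-1 * X](fiber W c (@ord0 r)).
rewrite mulr_sumr.
set M := \sum_(dl : {ffun V -> 'I_r.+1} | dl c == ord0) (\prod_(v | v != c) W (dl v)) *
   (q^-1 * \sum_(j < r.+1) W j * (center e ID r (dd (upd dl c j)) x == c)%:R + q ^+ r).
apply: (@le_trans _ _ M); rewrite /M.
  apply: ler_sum => dl _; apply: ler_wpM2l; first exact: Wc_ge0.
  apply: (oneD qa qb (a := fun j => counted e ID r (dd (upd dl c j)) x c)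
                (b := fun j => center e ID r (dd (upd dl c j)) x == c)).
  move=> j j' Ha Hlt; apply/eqP.
  apply: (key esym (d := dd (upd dl c j))) => //.
  - by move=> v Hv; rewrite /dd !ffunE (negbTE Hv).
  - by rewrite /dd !upd_c.
  - by rewrite /dd upd_c -ltnS ltn_ord.
rewrite (eq_bigr (fun dl : D => q^-1 * ((\prod_(v | v != c) W (dl v)) *
   \sum_(j < r.+1) W j * (center e ID r (dd (upd dl c j)) x == c)%:R) +
   q ^+ r * \prod_(v | v != c) W (dl v))); last first.
  by move=> dl _; ring.
rewrite big_split /= -mulr_sumr -[X in _ + X <= _]mulr_sumr sum_Wc // mulr1.
by [].
Qed.

Lemma main_bound :
  \sum_(dl : D) Pr W dl * (#|Fset e ID r (dd dl)|)%:R <=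
  #|V|%:R * (1 + q^-1 + #|V|%:R * q ^+ r).
Proof.
have qa := q0; have qb := q1.
set n := #|V|.
have S1 : forall dl : D, (#|Fset e ID r (dd dl)|%:R : R) <=
    n%:R + \sum_(x : V) \sum_(c : V) ((counted e ID r (dd dl) x c)%:R : R).
  move=> dl; have H := @F_card _ e ID r (dd dl).
  have : (#|Fset e ID r (dd dl)|%:R : R) <=
     (n + \sum_(x : V) \sum_(c : V) (counted e ID r (dd dl) x c : nat))%:R.
    by rewrite ler_nat.
  rewrite natrD natr_sum.
  by under eq_bigr do rewrite natr_sum.
have S2 : \sum_(dl : D) Pr W dl * (#|Fset e ID r (dd dl)|)%:R <=
   \sum_(dl : D) Pr W dl * (n%:R + \sum_(x : V) \sum_(c : V) ((counted e ID r (dd dl) x c)%:R : R)).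
  by apply: ler_sum => dl _; apply: ler_wpM2l; [exact: Pr_ge0|exact: S1].
apply: le_trans S2 _.
have E : \sum_(dl : D) Pr W dl * (n%:R + \sum_(x : V) \sum_(c : V) ((counted e ID r (dd dl) x c)%:R : R))
   = n%:R + \sum_(x : V) \sum_(c : V) \sum_(dl : D) Pr W dl * (counted e ID r (dd dl) x c)%:R.
  under eq_bigr do rewrite mulrDr.
  rewrite big_split /= -mulr_suml sum_Pr // mul1r.
  congr (_ + _).
  under eq_bigr do rewrite mulr_sumr.
  rewrite exchange_big /=; apply: eq_bigr => x _.
  under eq_bigr do rewrite mulr_sumr.
  by rewrite exchange_big.
rewrite E.
have S3 : \sum_(x : V) \sum_(c : V) \sum_(dl : D) Pr W dl * (counted e ID r (dd dl) x c)%:R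
   <= \sum_(x : V) \sum_(c : V) (q^-1 * \sum_(dl : D) Pr W dl *
          (center e ID r (dd dl) x == c)%:R + q ^+ r).
  by apply: ler_sum => x _; apply: ler_sum => c _; apply: per_xc.
move: S3.
have E2 : forall x, \sum_(c : V) (q^-1 * \sum_(dl : D) Pr W dl *
          (center e ID r (dd dl) x == c)%:R + q ^+ r) = q^-1 + n%:R * q ^+ r.
  move=> x; rewrite big_split /= -mulr_sumr sumr_const.
  have H1 : \sum_(c : V) \sum_(dl : D) Pr W dl * (center e ID r (dd dl) x == c)%:R = 1.
    rewrite exchange_big /=; rewrite -[RHS]sum_Pr; apply: eq_bigr => dl _.
    have Hs : forall a : V, \sum_(c : V) ((a == c)%:R : R) = 1.
      move=> a; rewrite (bigD1 a) //= eqxx big1 ?addr0 // => c Hc.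
      by rewrite eq_sym (negbTE Hc).
    by rewrite -mulr_sumr Hs mulr1.
  by rewrite H1 mulr1 mulr_natl.
move=> S3; rewrite (eq_bigr _ (fun x _ => E2 x)) sumr_const in S3.
have : n%:R + \sum_(x : V) \sum_(c : V) \sum_(dl : D) Pr W dl * (counted e ID r (dd dl) x c)%:R
   <= n%:R + ((q^-1 + n%:R * q ^+ r) *+ #|V|) by rewrite lerD2l.
move=> H; apply: le_trans H _.
rewrite -[X in _ + X <= _]mulr_natl le_eqVlt; apply/orP; left; apply/eqP; rewrite /n; ring.
Qed.

End MainBound.

Lemma ln_INR_ge0 (m : nat) : Rle 0 (ln (INR m.+1)).
Proof.
have H1 : Rle 1 (INR m.+1).
  rewrite S_INR; have := pos_INR m; slra.
case: (Req_dec (INR m.+1) 1) => [->|Hne]; first by rewrite ln_1; slra.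
have := ln_increasing 1 (INR m.+1) Rlt_0_1 ltac:(slra); rewrite ln_1; slra.
Qed.

Lemma final (n r : nat) :
  let q := Rpower (INR n) (- / INR r.+1) in
  0 < q /\ q <= 1 /\
  n%:R * (1 + q^-1 + n%:R * q ^+ r) <= 3 * Rpower (INR n) (1 + / INR r.+1).
Proof.
have Hk : Rlt 0 (INR r.+1) by rewrite S_INR; have := pos_INR r; slra.
case: n => [|m] q.
  have Hl : ln (INR 0) = 0 by rewrite /ln; case: Rlt_dec => //= h; exfalso; simpl in h; slra.
  have Hq : q = 1 by rewrite /q /Rpower Hl Rmult_0_r exp_0.
  rewrite Hq mul0r; split; first exact: ltr01.
  split=> //; apply: mulr_ge0 => //; apply/RleP; apply: Rlt_le; exact: exp_pos.
set x := INR m.+1.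
have Hx1 : Rle 1 x by rewrite /x S_INR; have := pos_INR m; slra.
set a := Rpower x (/ INR r.+1).
have Hq : q = a^-1 by exact: Rpower_Ropp.
have Ha1 : 1 <= a.
  apply/RleP; rewrite /a /Rpower -R1E.
  have := exp_ineq1_le (/ INR r.+1 * ln x).
  have := ln_INR_ge0 m; rewrite -/x => Hl.
  have : Rle 0 (/ INR r.+1 * ln x) by apply: Rmult_le_pos => //; apply: Rlt_le; apply: Rinv_0_lt_compat.
  slra.
have Ha0 : 0 < a by apply: lt_le_trans ltr01 Ha1.
have Hxa : x = a ^+ r.+1.
  rewrite -RpowE -Rpower_pow; last by apply/RltP.
  rewrite /a Rpower_mult Rinv_l; last by apply: Rgt_not_eq.
  by rewrite Rpower_1 //; slra.
have HR : Rpower x (1 + / INR r.+1) = x * a.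
  by rewrite Rpower_plus Rpower_1 //; slra.
rewrite HR Hq invrK; split; first by rewrite invr_gt0.
split; first by rewrite invr_le1 // unitfE; apply: lt0r_neq0.
have Hxn : (m.+1%:R : R) = x by rewrite /x INRE.
rewrite Hxn.
have Hxr : x * a^-1 ^+ r = a.
  rewrite exprVn Hxa exprS mulfK //.
  by apply: expf_neq0; apply: lt0r_neq0.
rewrite Hxr.
have Hx0 : 0 <= x by apply: le_trans ler01 _; apply/RleP; exact: Hx1.
nra.
Qed.

Local Close Scope ring_scope.

Theorem lemma9 :
  exists C : R,
  forall (V : finType) (e : rel V) (ID : V -> nat) (k : nat),
    symmetric e -> irreflexive e -> injective ID -> (2 <= k)%N ->
    let n := #|V| in
    let r := k.-1 in
    let p := (1 - Rpower (INR n) (- / INR k))%R in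
    exists F : {ffun V -> 'I_k} -> {set {set V}},
      (forall delta : {ffun V -> 'I_k},
         F delta \subset edges e /\
         forall x y : V, e x y ->
           (exists y' : V, [set x; y'] \in F delta /\
              center e ID r (fun v => nat_of_ord (delta v)) y'
              = center e ID r (fun v => nat_of_ord (delta v)) y)
           \/
           (exists x' : V, [set x'; y] \in F delta /\
              center e ID r (fun v => nat_of_ord (delta v)) x'
              = center e ID r (fun v => nat_of_ord (delta v)) x))
      /\
      (\sum_(delta : {ffun V -> 'I_k})
          outcome_prob p r delta * INR #|F delta| <=
        C * Rpower (INR n) (1 + / INR k))%R.
Proof.
exists (3%:R)%R.
move=> V e ID k esym irr inj; case: k => [//|k'] hk n r p.
exists (fun dl => Fset e ID k' (fun v => nat_of_ord (dl v))).
split.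
  move=> dl; split; first exact: F_sub.
  by move=> x y Exy; apply: (F_cover esym inj).
have [q0 [q1 H]] := final #|V| k'.
have MB := @main_bound V e esym ID k' _ q0 q1.
apply: le_trans H.
apply: le_trans MB.
rewrite le_eqVlt; apply/orP; left; apply/eqP.
apply: eq_bigr => dl _.
by rewrite INRE.
Qed.
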